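(* If $X$ is a nonempty topological space and $\Omega\neq\Omega_0$ is an arbitrary topological signature (i.e., $\Omega_n\neq\emptyset$ for some $n\ge1$), then the free Stone topological algebra $\overline{\Omega}_X\mathcal{S}t_\Omega$ is not profinite.
   Context: $\Omega=\biguplus_n\Omega_n$ is a topological signature. A Stone topological $\Omega$-algebra is a compact Hausdorff 0-dimensional space $A$ with continuous evaluation maps $\Omega_n\times A^n\to A$; $\mathcal{S}t_\Omega$ is the class of all of them. $\overline{\Omega}_X\mathcal{S}t_\Omega$ is the free Stone topological algebra over $X$: a Stone topological $\Omega$-algebra with a continuous map $\iota$ from $X$ whose image generates a dense subalgebra, such that every continuous map from $X$ into a Stone topological $\Omega$-algebra $T$ factors uniquely as $\hat\varphi\circ\iota$ with $\hat\varphi$ a continuous homomorphism. A topological algebra is profinite if it is compact and any two distinct elements are separated by a continuous homomorphism into a finite discrete $\Omega$-algebra. *)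

(* Defs.v *)
From HB Require Import structures.
From mathcomp Require Import all_boot all_order all_algebra.
From mathcomp Require Import all_classical all_reals all_analysis.
Set Implicit Arguments. Unset Strict Implicit. Unset Printing Implicit Defensive.
Import Order.TTheory GRing.Theory Num.Theory.
Local Open Scope classical_set_scope.

(* A topological signature Omega = disjoint union of the Omega_n, given by its
   components Omega_n : topologicalType (disjoint-union topology). *)
Definition tsignature := nat -> topologicalType.

Definition nonnullary (Om : tsignature) : Prop :=
  exists n : nat, (0 < n)%N /\ inhabited (Om n).

Definition ops (Om : tsignature) (A : Type) :=
  forall n : nat, Om n -> ('I_n -> A) -> A.

Definition topalg (Om : tsignature) (A : topologicalType) (opA : ops Om A) : Prop :=
  forall n : nat,
    continuous (fun p : Om n * prod_topology (fun _ : 'I_n => A) => opA n p.1 p.2).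

Definition zero_dim (A : topologicalType) : Prop :=
  forall (x : A) (U : set A), nbhs x U ->
    exists V : set A, [/\ clopen V, V x & V `<=` U].

Definition stone_space (A : topologicalType) : Prop :=
  [/\ compact [set: A], hausdorff_space A & zero_dim A].

Definition stone_alg (Om : tsignature) (A : topologicalType) (opA : ops Om A) : Prop :=
  stone_space A /\ topalg opA.

Definition is_hom (Om : tsignature) (A B : Type) (opA : ops Om A) (opB : ops Om B)
  (h : A -> B) : Prop :=
  forall (n : nat) (w : Om n) (a : 'I_n -> A), h (opA n w a) = opB n w (h \o a).

Definition closed_under_ops (Om : tsignature) (A : Type) (opA : ops Om A) (S : set A) : Prop :=
  forall (n : nat) (w : Om n) (a : 'I_n -> A), (forall i, S (a i)) -> S (opA n w a).

Definition gen_subalg (Om : tsignature) (A : Type) (opA : ops Om A) (G : set A) : set A :=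
  \bigcap_(S in [set S | G `<=` S /\ closed_under_ops opA S]) S.

Definition free_stone_alg (Om : tsignature) (X : topologicalType)
  (F : topologicalType) (opF : ops Om F) (iota : X -> F) : Prop :=
  [/\ stone_alg opF, continuous iota,
      closure (gen_subalg opF (range iota)) = [set: F] &
      forall (T : topologicalType) (opT : ops Om T), stone_alg opT ->
      forall phi : X -> T, continuous phi ->
      exists phih : F -> T,
        [/\ continuous phih, is_hom opF opT phih, phih \o iota = phi &
            forall psi : F -> T, continuous psi -> is_hom opF opT psi ->
              psi \o iota = phi -> psi = phih]].

Definition profinite (Om : tsignature) (A : topologicalType) (opA : ops Om A) : Prop :=
  compact [set: A] /\
  forall x y : A, x <> y ->
    exists (B : discreteTopologicalType) (opB : ops Om B) (h : A -> B),
      [/\ finite_set [set: B], topalg opB, continuous h, is_hom opA opB h &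
          h x <> h y].

(* Main.v *)
Require Import Defs.
From HB Require Import structures.
From mathcomp Require Import all_boot all_order all_algebra.
From mathcomp Require Import all_classical all_reals all_analysis.
Local Open Scope classical_set_scope.

Definition cs := cantor_space.
Definition shft (x : cs) : cs := fun m => x m.+1.

Lemma shft_cont : continuous shft.
Proof.
move=> x.
have := @pointwise_cvgP nat bool (shft @ nbhs x) (shft x) _.
move=> /(_ _) [_ H]; apply: H => t.
have := @proj_continuous nat (fun _ => bool) t.+1 x.
by [].
Qed.

Lemma cs_zero_dim : zero_dim cs.
Proof.
move=> x U nU.
have := zero_dimensional_cvg cantor_space_hausdorff cantor_zero_dimensional cantor_space_compact nU.
by move=> [D [Dx cD] DU]; exists D.
Qed.

Definition opA (Om : tsignature) : ops Om cs := fun k =>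
  match k return Om k -> ('I_k -> cs) -> cs with
  | 0 => fun _ _ => (fun _ => false)
  | k'.+1 => fun _ a => shft (a ord0)
  end.

Lemma opA_topalg Om : topalg (opA Om).
Proof.
case=> [|k] /=.
  exact: cst_continuous.
move=> p.
apply: (continuous_comp _ (shft_cont _)).
have hs : {for p, continuous (@snd (Om k.+1) {ptws 'I_k.+1 -> cs})}.
  exact: cvg_snd.
have hp := @proj_continuous _ (fun _ : 'I_k.+1 => cs) ord0 p.2.
have := @continuous_comp (Om k.+1 * {ptws 'I_k.+1 -> cs})%type {ptws 'I_k.+1 -> cs} cs snd (fun a => a ord0) p hs hp.
exact.
Qed.

Lemma cs_stone Om : stone_alg (opA Om).
Proof.
split; last exact: opA_topalg.
split; [exact: cantor_space_compact|exact: cantor_space_hausdorff|exact: cs_zero_dim].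
Qed.

Lemma cluster_closed (T : topologicalType) (G : set_system T) (C : set T) u :
  closed C -> G C -> cluster G u -> C u.
Proof. by move=> cC GC cu; apply: cC => B nB; exact: cu. Qed.

Lemma pigeon (B : Type) (G : B -> B) (b : B) : finite_set [set: B] ->
  exists i j, (i < j)%N /\ iter i G b = iter j G b.
Proof.
move=> finB; apply: contrapT => H.
have inj : {in [set: nat] &, injective (fun m => iter m G b)}.
  move=> i j _ _ eij; case: (ltngtP i j) => // [ij|ji].
  - by exfalso; apply: H; exists i, j.
  - by exfalso; apply: H; exists j, i.
have := inj_card_eq inj => /card_eqPle [_ le].
have : finite_set [set: nat].
  apply: card_le_finite le _.
  exact: sub_finite_set finB.
exact: infinite_nat.
Qed.

Lemma periodic (B : Type) (G : B -> B) (b : B) i j :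
  (i < j)%N -> iter i G b = iter j G b ->
  forall m k, (i <= m)%N -> iter (m + k * (j - i)) G b = iter m G b.
Proof.
move=> ij eij m k im.
have step : forall m', (i <= m')%N -> iter (m' + (j - i)) G b = iter m' G b.
  move=> m' im'; rewrite -(subnK im') -addnA subnKC ?(ltnW ij) //.
  by rewrite !iterD eij.
elim: k => [|k IH]; first by rewrite mul0n addn0.
by rewrite mulSn (addnC (j - i)) addnA step ?IH // (leq_trans im) // leq_addr.
Qed.

Definition e n := (n.+2)`!.

Lemma stab (B : Type) (G : B -> B) (b : B) i j :
  (i < j)%N -> iter i G b = iter j G b ->
  forall n, (j <= n)%N -> iter (e n) G b = iter (e j) G b.
Proof.
move=> ij eij n jn.
have p0 : (0 < j - i)%N by rewrite subn_gt0.
have pj : (j - i <= j.+2)%N by rewrite (leq_trans (leq_subr _ _)) // leqW.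
have pn : (j - i <= n.+2)%N by rewrite (leq_trans pj) // ltnS ltnS.
have len : (e j <= e n)%N by apply: leq_fact; rewrite ltnS ltnS.
have dv : (j - i) %| e n - e j.
  by apply: dvdn_sub; apply: dvdn_fact; rewrite p0.
rewrite -(subnK len) addnC -(divnK dv) periodic //.
by rewrite /e (leq_trans (ltnW ij)) // (leq_trans (leqnSn _)) // (leq_trans (leqnSn _)) // fact_geq.
Qed.

Definition dseq : cs := fun m => `[< exists k, m = e k.*2.+1 >].

Lemma dseq_odd n : dseq (e n.*2.+1) = true.
Proof. by apply/asboolP; exists n. Qed.

Lemma dseq_even n : dseq (e n.*2) = false.
Proof.
apply/asboolP => -[k]; rewrite /e => ek.
case: (ltngtP n.*2.+2 k.*2.+3) => [lt|lt|eq].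
- by move: (ltn_fact (ltn0Sn _) lt); rewrite ek ltnn.
- by move: (ltn_fact (ltn0Sn _) lt); rewrite ek ltnn.
- by move: eq => /eqP; rewrite !eqSS => /eqP /(congr1 odd); rewrite /= !odd_double.
Qed.

Theorem theorem4p18 (Om : tsignature) (X : topologicalType)
  (F : topologicalType) (opF : ops Om F) (iota : X -> F) :
  inhabited X -> nonnullary Om -> free_stone_alg opF iota ->
  ~ profinite opF.
Proof.
move=> [x0] [n0 [n0pos [w0]]] [stF ctiota _ univ] [compF sep].
have [phih [cph hph cmp _]] := univ cs (opA Om) (cs_stone Om) (fun _ => dseq) (@cst_continuous X cs dseq).
set z := iota x0.
pose gF y := opF n0 w0 (fun _ => y).
have phig : forall y, phih (gF y) = shft (phih y).
  move=> y; rewrite /gF hph; case: n0 n0pos w0 {gF} => [//|k] _ w0.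
  by [].
have phiz : phih z = dseq by have := congr1 (fun f => f x0) cmp.
have phiit : forall m, phih (iter m gF z) = iter m shft dseq.
  by elim=> [//|m IH]; rewrite /= phig IH.
have itsh : forall m t, iter m shft dseq t = dseq (m + t).
  by elim=> [//|m IH] t; rewrite iterS /shft IH addSnnS.
pose a n := iter (e n.*2) gF z.
pose b n := iter (e n.*2.+1) gF z.
have cl0 : forall bb : bool, closed [set y : F | phih y 0 = bb].
  move=> bb.
  have c0 : continuous (fun y : F => phih y 0).
    move=> y; apply: (@continuous_comp F cs bool phih (fun c : cs => c 0) y (cph y)).
    exact: (@proj_continuous nat (fun _ => bool) 0).
  by have := (continuous_closedP _).1 c0 [set bb] (discrete_closed _).
have [u [_ cu]] := compF (a @ \oo) _ filterT.
have [v [_ cv]] := compF (b @ \oo) _ filterT.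
have pu : phih u 0 = false.
  apply: (@cluster_closed _ _ _ _ (cl0 false) _ cu).
  by exists 0%N => // n _ /=; rewrite phiit itsh addn0 dseq_even.
have pv : phih v 0 = true.
  apply: (@cluster_closed _ _ _ _ (cl0 true) _ cv).
  by exists 0%N => // n _ /=; rewrite phiit itsh addn0 dseq_odd.
have uv : u <> v by move=> uv; move: pu; rewrite uv pv.
have [B [opB [h [finB _ ch hh huv]]]] := sep u v uv.
pose G bb := opB n0 w0 (fun _ => bb).
have hit : forall m, h (iter m gF z) = iter m G (h z).
  by elim=> [//|m IH]; rewrite /= /gF hh -IH.
have [i [j [ij eij]]] := pigeon _ G (h z) finB.
have clh : closed [set y : F | h y = iter (e j) G (h z)].
  by have := (continuous_closedP _).1 ch [set iter (e j) G (h z)] (discrete_closed _).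
apply: huv.
have -> : h u = iter (e j) G (h z).
  apply: (@cluster_closed _ _ _ _ clh _ cu).
  exists j => // n /= jn; rewrite hit (stab _ _ _ _ _ ij eij) //.
  by rewrite -addnn; exact: (leq_trans jn (leq_addr n n)).
have -> : h v = iter (e j) G (h z).
  apply: (@cluster_closed _ _ _ _ clh _ cv).
  exists j => // n /= jn; rewrite hit (stab _ _ _ _ _ ij eij) //.
  by rewrite -addnn; exact: (leq_trans jn (leq_trans (leq_addr n n) (leqnSn _))).
by [].
Qed.
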